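(* Let $\mathcal{M}$ be a countable Scott set coded by $M=\bigoplus_i X_i$ and let $C \subseteq \omega^2$. If $\mathcal{U}^{\mathcal{M}}_C$ is an $\mathcal{M}$-minimal largeness class, then $\mathcal{U}^{\mathcal{M}}_C$ is partition regular.
   Context: A largeness class is a non-empty $\mathcal{A} \subseteq 2^\omega$ closed upward under $\subseteq$ such that for every finite cover $Y_0\cup\dots\cup Y_{k-1}=\omega$ some $Y_j \in \mathcal{A}$. A partition regular class is a largeness class $\mathcal{L}$ such that for every $X\in\mathcal{L}$ and every finite cover $Y_0\cup\dots\cup Y_{k-1}\supseteq X$ some $Y_j \in \mathcal{L}$. A Scott set is a collection of sets closed under Turing reducibility and join such that every infinite binary tree in it has a path in it; it is countable coded by $M$ if it equals $\{X_i : i\in\omega\}$ with $M = \bigoplus_i X_i$. Fix an effective enumeration $\mathcal{U}^Z_0,\mathcal{U}^Z_1,\dots$ (uniform in the oracle $Z$) of all $\Sigma^0_1(Z)$ classes which are upward-closed under $\subseteq$; for $C\subseteq\omega^2$, $\mathcal{U}^{\mathcal{M}}_C = \bigcap_{\langle e,i\rangle\in C}\mathcal{U}^{X_i}_e$. A class $\mathcal{A}$ is $\mathcal{M}$-minimal if for every $X\in\mathcal{M}$ and $e\in\omega$, either $\mathcal{A}\subseteq\mathcal{U}^X_e$ or $\mathcal{A}\cap\mathcal{U}^X_e$ is not a largeness class. *)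

(* Defs.v *)
From Stdlib Require Cantor.
From mathcomp Require Import all_boot.

Set Implicit Arguments.
Unset Strict Implicit.
Unset Printing Implicit Defensive.

Definition set := nat -> bool.
Definition cls := set -> Prop.

Definition subset (X Y : set) : Prop := forall n, X n -> Y n.

Definition pair (x y : nat) : nat := Cantor.to_nat (x, y).
Definition unpair (n : nat) : nat * nat := Cantor.of_nat n.

(* Oracle computation: mu-recursive functions with an oracle Z,         *)
(* coded by natural numbers, evaluated with a fuel bound.               *)
(*   code c, (t, r) := unpair c, by t:                                  *)
(*   0 : zero function                                                  *)
(*   1 : successor of first argument                                    *)
(*   2 : projection onto argument r                                     *)
(*   3 : oracle query  Z (first argument)  (as 0/1)                     *)
(*   4 : composition, r = pair f gs, gs a code of a list of codes       *)
(*   5 : primitive recursion on the first argument, r = pair f g        *)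
(*       R(0, xs) = f xs,  R(n+1, xs) = g (n :: R(n,xs) :: xs)          *)
(*   6 : unbounded minimisation, r = f : mu y. f (y :: xs) = 0          *)
(*   other : nowhere defined                                            *)
(* Lists of naturals are coded by 0 = nil, (pair h t).+1 = h :: t.      *)
Fixpoint decode_list_fuel (k n : nat) : seq nat :=
  match k with
  | 0 => [::]
  | k'.+1 =>
      match n with
      | 0 => [::]
      | n'.+1 => (unpair n').1 :: decode_list_fuel k' (unpair n').2
      end
  end.
Definition decode_list (n : nat) : seq nat := decode_list_fuel n.+1 n.

Fixpoint all_some (s : seq (option nat)) : option (seq nat) :=
  match s with
  | [::] => Some [::]
  | o :: s' =>
      match o, all_some s' with
      | Some v, Some vs => Some (v :: vs)
      | _, _ => None
      end
  end.

Fixpoint mu_search (F : nat -> option nat) (y0 bound : nat) : option nat :=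
  match bound with
  | 0 => None
  | b.+1 =>
      match F y0 with
      | Some 0 => Some y0
      | Some _ => mu_search F y0.+1 b
      | None => None
      end
  end.

Fixpoint prim_rec (G : nat -> nat -> option nat) (n : nat) (base : option nat)
  : option nat :=
  match n with
  | 0 => base
  | n'.+1 =>
      match prim_rec G n' base with
      | Some acc => G n' acc
      | None => None
      end
  end.

Fixpoint eval (k : nat) (Z : set) (c : nat) (xs : seq nat) : option nat :=
  match k with
  | 0 => None
  | k'.+1 =>
      let t := (unpair c).1 in
      let r := (unpair c).2 in
      match t with
      | 0 => Some 0
      | 1 => Some (head 0 xs).+1
      | 2 => Some (nth 0 xs r)
      | 3 => Some (nat_of_bool (Z (head 0 xs)))
      | 4 =>
          let f := (unpair r).1 in
          let gs := decode_list (unpair r).2 in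
          match all_some (map (fun g => eval k' Z g xs) gs) with
          | Some ys => eval k' Z f ys
          | None => None
          end
      | 5 =>
          let f := (unpair r).1 in
          let g := (unpair r).2 in
          let rest := behead xs in
          prim_rec (fun i acc => eval k' Z g [:: i, acc & rest])
                   (head 0 xs) (eval k' Z f rest)
      | 6 => mu_search (fun y => eval k' Z r (y :: xs)) 0 k'
      | _ => None
      end
  end.

Definition halts (Z : set) (e n : nat) : Prop :=
  exists k v, eval k Z e [:: n] = Some v.

Definition turing_le (X Z : set) : Prop :=
  exists e, forall n, exists k, eval k Z e [:: n] = Some (nat_of_bool (X n)).

Definition join (X Y : set) : set :=
  fun n => if odd n then Y n./2 else X n./2.

(* Binary strings coded by naturals (bijective base-2 numeration).      *)
Fixpoint code_str (s : seq bool) : nat :=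
  match s with
  | [::] => 0
  | b :: s' => (code_str s').*2 + (nat_of_bool b).+1
  end.

Definition is_tree (T : set) : Prop :=
  forall (s : seq bool) (n : nat), T (code_str s) -> T (code_str (take n s)).

Definition infinite (T : set) : Prop := forall m, exists n, m <= n /\ T n.

Definition is_path (P : set) (T : set) : Prop :=
  forall n, T (code_str (mkseq P n)).

Definition scott_set (S : cls) : Prop :=
  [/\ (forall X Y, S X -> turing_le Y X -> S Y),
      (forall X Y, S X -> S Y -> S (join X Y)) &
      (forall T, S T -> is_tree T -> infinite T ->
         exists P, S P /\ is_path P T)].

Definition coded_by (Xs : nat -> set) : cls :=
  fun Y => exists i, forall n, Y n = Xs i n.

(* the code M = (+)_i X_i  (M <i,n> = X_i n) -- recorded for reference *)
Definition code_of (Xs : nat -> set) : set :=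
  fun m => Xs (unpair m).1 (unpair m).2.

(* The enumeration of upward-closed Sigma^0_1(Z) classes:               *)
(*   U^Z_e = { X : exists finite D subset of X whose canonical index    *)
(*             lies in W^Z_e }                                          *)
Definition canon_index (D : seq nat) : nat := \sum_(x <- undup D) 2 ^ x.

Definition U (Z : set) (e : nat) : cls :=
  fun X => exists D : seq nat,
    (forall x, x \in D -> X x) /\ halts Z e (canon_index D).

Definition U_C (Xs : nat -> set) (C : nat -> nat -> Prop) : cls :=
  fun X => forall e i, C e i -> U (Xs i) e X.

Definition largeness (A : cls) : Prop :=
  [/\ (exists X, A X),
      (forall X Y, A X -> subset X Y -> A Y) &
      (forall (k : nat) (Y : nat -> set),
         (forall n, exists2 j, j < k & Y j n) ->
         exists2 j, j < k & A (Y j))].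

Definition partition_regular (A : cls) : Prop :=
  largeness A /\
  forall X, A X ->
    forall (k : nat) (Y : nat -> set),
      (forall n, X n -> exists2 j, j < k & Y j n) ->
      exists2 j, j < k & A (Y j).

Definition minimal (Xs : nat -> set) (A : cls) : Prop :=
  forall X, coded_by Xs X -> forall e : nat,
    (forall Y, A Y -> U X e Y) \/
    ~ largeness (fun Y => A Y /\ U X e Y).

(* Main.v *)
Require Import Defs.
From mathcomp Require Import all_boot zify.
From Stdlib Require Import Classical ClassicalEpsilon.
Set Implicit Arguments. Unset Strict Implicit. Unset Printing Implicit Defensive.

Lemma unpair_pair x y : unpair (pair x y) = (x, y).
Proof. exact: Cantor.cancel_of_to. Qed.
Lemma pair_unpair n : pair (unpair n).1 (unpair n).2 = n.
Proof. rewrite /pair /unpair -surjective_pairing; exact: Cantor.cancel_to_of. Qed.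

Lemma to_nat_ge x y : (x + y <= pair x y)%coq_nat.
Proof.
have := Cantor.to_nat_spec x y. rewrite /pair. nia.
Qed.
Lemma unpair_le1 n : (unpair n).1 <= n.
Proof. rewrite -{2}(pair_unpair n). apply/leP. have := to_nat_ge (unpair n).1 (unpair n).2. lia. Qed.
Lemma unpair_le2 n : (unpair n).2 <= n.
Proof. rewrite -{2}(pair_unpair n). apply/leP. have := to_nat_ge (unpair n).1 (unpair n).2. lia. Qed.
Lemma unpair_lt2 n : 0 < (unpair n).1 -> (unpair n).2 < n.
Proof. move=> H. rewrite -{2}(pair_unpair n). move/ltP: H => H. apply/ltP. 
have := Cantor.to_nat_spec (unpair n).1 (unpair n).2. rewrite /pair. nia. Qed.

Arguments pair : simpl never.
Arguments unpair : simpl never.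

Lemma eval_S k Z c xs : eval k.+1 Z c xs =
 match (unpair c).1 with
      | 0 => Some 0
      | 1 => Some (head 0 xs).+1
      | 2 => Some (nth 0 xs (unpair c).2)
      | 3 => Some (nat_of_bool (Z (head 0 xs)))
      | 4 =>
          match all_some (map (fun g => eval k Z g xs) (decode_list (unpair (unpair c).2).2)) with
          | Some ys => eval k Z (unpair (unpair c).2).1 ys
          | None => None
          end
      | 5 =>
          prim_rec (fun i acc => eval k Z (unpair (unpair c).2).2 [:: i, acc & behead xs])
                   (head 0 xs) (eval k Z (unpair (unpair c).2).1 (behead xs))
      | 6 => mu_search (fun y => eval k Z (unpair c).2 (y :: xs)) 0 k
      | _ => None
      end.
Proof. by []. Qed.

Arguments pair : simpl never.
Arguments unpair : simpl never.

Lemma all_some_mono (A : Type) (F F' : A -> option nat) l ys :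
  (forall a v, F a = Some v -> F' a = Some v) ->
  all_some (map F l) = Some ys -> all_some (map F' l) = Some ys.
Proof.
move=> H; elim: l ys => [|a l IH] ys //=.
case E: (F a) => [v|] //; case E2: (all_some (map F l)) => [vs|] // [<-].
by rewrite (H _ _ E) (IH _ E2).
Qed.

Lemma prim_rec_mono G G' n b b' v :
  (forall i a w, G i a = Some w -> G' i a = Some w) ->
  (forall w, b = Some w -> b' = Some w) ->
  prim_rec G n b = Some v -> prim_rec G' n b' = Some v.
Proof.
move=> HG Hb; elim: n v => [|n IH] v /=; first exact: Hb.
case E: (prim_rec G n b) => [a|] // H. by rewrite (IH _ E) (HG _ _ _ H).
Qed.

Lemma mu_search_mono F F' y0 b b' v :
  (forall y w, F y = Some w -> F' y = Some w) -> b <= b' ->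
  mu_search F y0 b = Some v -> mu_search F' y0 b' = Some v.
Proof.
move=> HF; elim: b y0 b' => [|b IH] y0 [|b'] //= Hb.
case E: (F y0) => [[|w]|] //; rewrite (HF _ _ E) //.
exact: IH.
Qed.

Lemma eval_mono k k' Z c xs v : k <= k' -> eval k Z c xs = Some v -> eval k' Z c xs = Some v.
Proof.
elim: k k' c xs v => [|k IH] [|k'] c xs v //= Hk.
case: (unpair c).1 => [|[|[|[|[|[|[|t]]]]]]] //.
- case E: (all_some _) => [ys|] // H.
  rewrite (all_some_mono (F := fun g => eval k Z g xs) (ys := ys)) //; first exact: IH H.
  by move=> a w; apply: IH.
- apply: prim_rec_mono; by move=> *; apply: IH; eauto.
- apply: mu_search_mono => //; by move=> *; apply: IH; eauto.
Qed.

Lemma eval_det k k' Z c xs v v' : eval k Z c xs = Some v -> eval k' Z c xs = Some v' -> v = v'.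
Proof.
move=> H1 H2. have := eval_mono (leq_maxl k k') H1. have := eval_mono (leq_maxr k k') H2.
by move=> -> [].
Qed.

Arguments pair : simpl never.
Arguments unpair : simpl never.

Inductive pr : Type :=
| PZ | PS | PP (i : nat) | PO | PC (f : pr) (gs : seq pr) | PR (f g : pr).

Fixpoint prf (F : nat) (G : nat -> nat -> nat) n :=
  match n with 0 => F | n'.+1 => G n' (prf F G n') end.

Fixpoint sem (Z : set) (p : pr) (xs : seq nat) {struct p} : nat :=
  match p with
  | PZ => 0
  | PS => (head 0 xs).+1
  | PP i => nth 0 xs i
  | PO => nat_of_bool (Z (head 0 xs))
  | PC f gs => sem Z f (map (fun g => sem Z g xs) gs)
  | PR f g => let rest := behead xs in
     (fix R n := match n with 0 => sem Z f rest | n'.+1 => sem Z g [:: n', R n' & rest] end) (head 0 xs)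
  end.

Lemma semR Z f g n rest : sem Z (PR f g) (n :: rest) =
  prf (sem Z f rest) (fun i acc => sem Z g [:: i, acc & rest]) n.
Proof. by elim: n => //= n ->. Qed.

Fixpoint enc_list (l : seq nat) : nat :=
  match l with [::] => 0 | h :: t => (pair h (enc_list t)).+1 end.

Lemma enc_list_size l : size l <= enc_list l.
Proof.
elim: l => //= h t IH. have := to_nat_ge h (enc_list t). rewrite /pair. lia.
Qed.

Lemma decode_enc l : decode_list (enc_list l) = l.
Proof.
rewrite /decode_list.
suff H : forall k, size l < k -> decode_list_fuel k (enc_list l) = l.
  apply: H. have := enc_list_size l. lia.
elim: l => [|h t IH] [|k] //= Hk. by rewrite unpair_pair /= IH.
Qed.

Fixpoint cp (p : pr) : nat :=
  match p with
  | PZ => pair 0 0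
  | PS => pair 1 0
  | PP i => pair 2 i
  | PO => pair 3 0
  | PC f gs => pair 4 (pair (cp f) (enc_list (map cp gs)))
  | PR f g => pair 5 (pair (cp f) (cp g))
  end.

Definition fok Z c (F : seq nat -> nat) := forall xs, exists k, eval k Z c xs = Some (F xs).

Lemma all_some_ok Z (gs : seq pr) xs :
  (forall g, List.In g gs -> fok Z (cp g) (sem Z g)) ->
  exists k, all_some (map (fun g => eval k Z g xs) (map cp gs)) = Some (map (fun g => sem Z g xs) gs).
Proof.
elim: gs => [|g gs IH] H; first by exists 0.
have [k1 H1] := H g (or_introl erefl) xs.
have [k2 H2] := IH (fun g' Hg' => H g' (or_intror Hg')).
exists (maxn k1 k2) => /=.
rewrite (eval_mono (leq_maxl k1 k2) H1).
by rewrite (all_some_mono (F := fun g => eval k2 Z g xs) (ys := map (fun g => sem Z g xs) gs) _ H2) // => a v; apply: eval_mono; exact: leq_maxr.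
Qed.


Definition pr_ind2 (P : pr -> Prop) (h0 : P PZ) (h1 : P PS) (h2 : forall i, P (PP i)) (h3 : P PO)
  (h4 : forall f gs, P f -> (forall g, List.In g gs -> P g) -> P (PC f gs))
  (h5 : forall f g, P f -> P g -> P (PR f g)) : forall p, P p :=
  fix IH p := match p with
  | PZ => h0 | PS => h1 | PP i => h2 i | PO => h3
  | PC f gs => h4 f gs (IH f)
     ((fix F (l : seq pr) : forall g, List.In g l -> P g :=
        match l with
        | [::] => fun g (H : False) => False_ind _ H
        | a :: l' => fun g H => match H with
                    | or_introl E => eq_ind a P (IH a) g E
                    | or_intror H' => F l' g H' end
        end) gs)
  | PR f g => h5 f g (IH f) (IH g)
  end.

Lemma cp_ok Z p : fok Z (cp p) (sem Z p).
Proof.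
elim/pr_ind2: p.
- by move=> xs; exists 1; rewrite eval_S unpair_pair.
- by move=> xs; exists 1; rewrite eval_S unpair_pair.
- by move=> i xs; exists 1; rewrite eval_S unpair_pair.
- by move=> xs; exists 1; rewrite eval_S unpair_pair.
- move=> f gs Hf Hgs xs /=.
  have [k1 H1] := all_some_ok xs Hgs.
  have [k2 H2] := Hf (map (fun g => sem Z g xs) gs).
  exists (maxn k1 k2).+1; rewrite eval_S !unpair_pair /= decode_enc.
  rewrite (all_some_mono (F := fun g => eval k1 Z g xs) (ys := map (fun g => sem Z g xs) gs) _ H1).
    exact: eval_mono (leq_maxr _ _) H2.
  by move=> a v; apply: eval_mono; exact: leq_maxl.
- move=> f g Hf Hg xs.
  have Hn : forall n rest, exists k, prim_rec (fun i acc => eval k Z (cp g) [:: i, acc & rest]) n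
        (eval k Z (cp f) rest) = Some (prf (sem Z f rest) (fun i acc => sem Z g [:: i, acc & rest]) n).
    move=> n rest; elim: n => [|n [k IH]] /=; first exact: Hf.
    have [k2 H2] := Hg [:: n, prf (sem Z f rest) (fun i acc => sem Z g [:: i, acc & rest]) n & rest].
    exists (maxn k k2).
    rewrite (prim_rec_mono (G := fun i acc => eval k Z (cp g) [:: i, acc & rest]) (b := eval k Z (cp f) rest) _ _ IH).
      exact: eval_mono (leq_maxr _ _) H2.
    by move=> *; apply: eval_mono (leq_maxl _ _) _.
    by move=> *; apply: eval_mono (leq_maxl _ _) _.
  case: xs => [|n rest].
    have [k H] := Hn 0 [::]. exists k.+1; rewrite eval_S !unpair_pair /=. move: H => /= ->. done.
  have [k H] := Hn n rest. exists k.+1; rewrite eval_S !unpair_pair /= H -semR.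
  by [].
Qed.

Arguments pair : simpl never.
Arguments unpair : simpl never.

Fixpoint cst c := match c with 0 => PZ | c'.+1 => PC PS [:: cst c'] end.
Lemma sem_cst Z c xs : sem Z (cst c) xs = c.
Proof. by elim: c => //= c ->. Qed.
Opaque cst.

Definition addP := PR (PP 0) (PC PS [:: PP 1]).
Lemma sem_add Z x y : sem Z addP [:: x; y] = x + y.
Proof. rewrite semR; elim: x => //= x ->. by rewrite addSn. Qed.
Opaque addP.

Definition mulP := PR PZ (PC addP [:: PP 1; PP 2]).
Lemma sem_mul Z x y : sem Z mulP [:: x; y] = x * y.
Proof. rewrite semR; elim: x => //= x ->. rewrite sem_add mulSn. lia. Qed.
Opaque mulP.

Definition iszP := PR (cst 1) PZ.
Lemma sem_isz Z x : sem Z iszP [:: x] = nat_of_bool (x == 0).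
Proof. rewrite semR; case: x => //=; exact: sem_cst. Qed.
Opaque iszP.

Definition sgP := PR PZ (cst 1).
Lemma sem_sg Z x : sem Z sgP [:: x] = nat_of_bool (x != 0).
Proof. rewrite semR; case: x => //= *; exact: sem_cst. Qed.
Opaque sgP.

Definition predP := PR PZ (PP 0).
Lemma sem_pred Z x : sem Z predP [:: x] = x.-1.
Proof. by rewrite semR; case: x. Qed.
Opaque predP.

Definition oddP := PR PZ (PC iszP [:: PP 1]).
Lemma sem_odd Z x : sem Z oddP [:: x] = nat_of_bool (odd x).
Proof. rewrite semR; elim: x => //= x ->. by rewrite sem_isz; case: (odd x). Qed.
Opaque oddP.

Definition halfP := PR PZ (PC addP [:: PP 1; PC oddP [:: PP 0]]).
Lemma sem_half Z x : sem Z halfP [:: x] = x./2.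
Proof. rewrite semR; elim: x => //= x ->. rewrite sem_odd sem_add. change (x.+1./2) with (uphalf x). by rewrite uphalf_half addnC. Qed.
Opaque halfP.

Definition iterH := PR (PP 0) (PC halfP [:: PP 1]).
Lemma sem_iterH Z i x : sem Z iterH [:: i; x] = iter i half x.
Proof. rewrite semR; elim: i => //= i ->. by rewrite sem_half. Qed.
Opaque iterH.

Definition bitf (x i : nat) : bool := odd (iter i half x).
Definition bitP := PC oddP [:: iterH].
Lemma sem_bit Z i x : sem Z bitP [:: i; x] = nat_of_bool (bitf x i).
Proof. by rewrite /= sem_iterH sem_odd. Qed.
Opaque bitP.

Definition impP := PC iszP [:: PC mulP [:: PP 0; PC iszP [:: PP 1]]].
Lemma sem_imp Z a b : sem Z impP [:: nat_of_bool a; nat_of_bool b] = nat_of_bool (a ==> b).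
Proof. by rewrite /= sem_isz sem_mul sem_isz; case: a; case: b. Qed.
Opaque impP.

Definition orPr := PC sgP [:: PC addP [:: PP 0; PP 1]].
Lemma sem_or Z a b : sem Z orPr [:: nat_of_bool a; nat_of_bool b] = nat_of_bool (a || b).
Proof. by rewrite /= sem_add sem_sg; case: a; case: b. Qed.
Opaque orPr.

Definition pps i a := map PP (iota i a).
Lemma sem_pps Z pre xs : map (fun g => sem Z g (pre ++ xs)) (pps (size pre) (size xs)) = xs.
Proof.
elim: xs pre => [|x xs IH] pre //=.
rewrite nth_cat ltnn subnn /=. congr (_ :: _).
have := IH (rcons pre x). by rewrite size_rcons -cats1 -catA.
Qed.
Lemma sem_pps1 Z x xs : map (fun g => sem Z g (x :: xs)) (pps 1 (size xs)) = xs.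
Proof. exact: (sem_pps Z [:: x]). Qed.
Lemma sem_pps2 Z x y xs : map (fun g => sem Z g [:: x, y & xs]) (pps 2 (size xs)) = xs.
Proof. exact: (sem_pps Z [:: x; y]). Qed.

Lemma iota_r N : iota 0 N.+1 = rcons (iota 0 N) N.
Proof. by rewrite -addn1 iotaD cats1. Qed.

Definition ballP P p := PR (cst 1) (PC mulP [:: PP 1; PC sgP [:: PC P (PP 0 :: pps 2 p)]]).
Lemma sem_ball Z P ps N : sem Z (ballP P (size ps)) (N :: ps) =
  nat_of_bool (all (fun j => sem Z P (j :: ps) != 0) (iota 0 N)).
Proof.
rewrite semR; elim: N => [|N IH]; first exact: sem_cst.
rewrite iota_r all_rcons /= IH sem_pps2 sem_sg sem_mul.
by case: (all _ _); case: (_ != 0).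
Qed.

Lemma semC1 Z f g xs : sem Z (PC f [:: g]) xs = sem Z f [:: sem Z g xs].
Proof. by []. Qed.

Definition bexP P p := PC sgP [:: PR PZ (PC addP [:: PP 1; PC P (PP 0 :: pps 2 p)])].
Lemma sem_bex Z P ps N : sem Z (bexP P (size ps)) (N :: ps) =
  nat_of_bool (has (fun j => sem Z P (j :: ps) != 0) (iota 0 N)).
Proof.
rewrite /bexP semC1 semR sem_sg; congr nat_of_bool.
elim: N => // N IH.
rewrite iota_r has_rcons /= sem_pps2 sem_add -IH. by case: (prf _ _ N); case: (sem _ _ _).
Qed.

Definition ocode (o : option nat) := match o with None => 0 | Some v => v.+1 end.

Arguments pair : simpl never.
Arguments unpair : simpl never.
Opaque cst addP mulP iszP sgP predP oddP halfP iterH bitP impP orPr.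

Fixpoint allpos (Ys : seq pr) : pr :=
  match Ys with [::] => cst 1 | Y :: Ys' => PC mulP [:: PC sgP [:: Y]; allpos Ys'] end.
Lemma sem_allpos Z Ys l : sem Z (allpos Ys) l = nat_of_bool (all (fun Y => sem Z Y l != 0) Ys).
Proof.
elim: Ys => [|Y Ys IH] /=; first exact: sem_cst.
rewrite IH sem_sg sem_mul. by case: (_ != 0); case: (all _ _).
Qed.

Definition spred := PC predP [:: PP 0].

Definition stepP (v : pr) :=
  PC addP [:: PP 1; PC mulP [:: PC iszP [:: PP 1]; PC addP [:: PC iszP [:: v];
     PC mulP [:: PC mulP [:: PC iszP [:: PC predP [:: v]]; PC sgP [:: v]]; PC PS [:: PC PS [:: PP 0]]]]]].

Fixpoint clk (rm : pr) (d e a : nat) {struct d} : pr :=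
  match d with 0 => PZ | d'.+1 =>
  let r := (unpair e).2 in
  let body := match (unpair e).1 with
   | 0 => cst 1
   | 1 => PC PS [:: PC PS [:: PP 1]]
   | 2 => PC PS [:: PP r.+1]
   | 3 => PC PS [:: PC PO [:: PC rm [:: PP 1]]]
   | 4 => let Ys := map (fun g => PC (clk rm d' g a) (spred :: pps 1 a)) (decode_list (unpair r).2) in
          PC mulP [:: allpos Ys; PC (clk rm d' (unpair r).1 (size (decode_list (unpair r).2)))
                                      (spred :: map (fun Y => PC predP [:: Y]) Ys)]
   | 5 => let F := PC (clk rm d' (unpair r).1 a.-1) (spred :: pps 1 a.-1) in
          let G := PC mulP [:: PC sgP [:: PP 1];
                     PC (clk rm d' (unpair r).2 a.-1.+2) [:: PC predP [:: PP 2], PP 0, PC predP [:: PP 1] & pps 3 a.-1]] in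
          PC (PR F G) [:: PP 1, PP 0 & pps 2 a.-1]
   | 6 => let v := PC (clk rm d' r a.+1) [:: PC predP [:: PP 2], PP 0 & pps 3 a] in
          PC predP [:: PC (PR PZ (stepP v)) (spred :: PP 0 :: pps 1 a)]
   | _ => PZ end in
  PC mulP [:: PC sgP [:: PP 0]; body]
  end.

Definition stepf (F : nat -> option nat) j st :=
  if st != 0 then st else match F j with None => 1 | Some 0 => j.+2 | Some _ => 0 end.

Fixpoint rb (F : nat -> option nat) y0 b :=
  match b with 0 => 0 | b'.+1 =>
    match F y0 with Some 0 => y0.+2 | Some _ => rb F y0.+1 b' | None => 1 end end.

Fixpoint fwd (F : nat -> option nat) y0 b st :=
  match b with 0 => st | b'.+1 => fwd F y0.+1 b' (stepf F y0 st) end.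

Lemma mu_rb F y0 b : ocode (mu_search F y0 b) = (rb F y0 b).-1.
Proof. elim: b y0 => //= b IH y0. case: (F y0) => [[|w]|] //=. Qed.

Lemma fwd_const F y0 b st : st != 0 -> fwd F y0 b st = st.
Proof. elim: b y0 => //= b IH y0 H. by rewrite /stepf H IH. Qed.

Lemma fwd_rb F y0 b : fwd F y0 b 0 = rb F y0 b.
Proof.
elim: b y0 => //= b IH y0. rewrite /stepf /=.
case: (F y0) => [[|w]|] //=; by rewrite fwd_const.
Qed.

Lemma fwdS F y0 b st : fwd F y0 b.+1 st = stepf F (y0 + b) (fwd F y0 b st).
Proof.
elim: b y0 st => [|b IH] y0 st; first by rewrite /= addn0.
rewrite -[fwd F y0 b.+2 st]/(fwd F y0.+1 b.+1 (stepf F y0 st)) IH addSnnS.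
by [].
Qed.

Lemma prf_fwd F b : prf 0 (fun j st => stepf F j st) b = fwd F 0 b 0.
Proof. elim: b => // b IH. by rewrite fwdS /= IH. Qed.

Lemma mu_prf F b : ocode (mu_search F 0 b) = (prf 0 (fun j st => stepf F j st) b).-1.
Proof. by rewrite mu_rb prf_fwd fwd_rb. Qed.

Lemma all_some_ocode (A : Type) (F : A -> option nat) l :
  all_some (map F l) = if all (fun g => ocode (F g) != 0) l
                       then Some (map (fun g => (ocode (F g)).-1) l) else None.
Proof.
elim: l => //= g l ->. case: (F g) => //= v. by case: (all _ _).
Qed.

Lemma decode_le k n : all (fun g => g <= n) (decode_list_fuel k n).
Proof.
elim: k n => //= k IH [|n] //=. apply/andP; split.
  apply: leq_trans (unpair_le1 n) _. exact: leqnSn.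
apply/allP => g Hg. have := allP (IH (unpair n).2) g Hg. move=> H.
apply: leq_trans H _. apply: leq_trans (unpair_le2 n) _. exact: leqnSn.
Qed.

Arguments pair : simpl never.
Arguments unpair : simpl never.
Opaque cst addP mulP iszP sgP predP oddP halfP iterH bitP impP orPr.

Lemma semC2 Z f g h l : sem Z (PC f [:: g; h]) l = sem Z f [:: sem Z g l; sem Z h l].
Proof. by []. Qed.

Lemma prf_ext F G G' n : (forall i acc, G i acc = G' i acc) -> prf F G n = prf F G' n.
Proof. move=> H; elim: n => //= n ->. exact: H. Qed.

Lemma sem_stepP Z v j st l :
  sem Z (stepP v) [:: j, st & l] =
  let x := sem Z v [:: j, st & l] in
  st + nat_of_bool (st == 0) * (nat_of_bool (x == 0) + nat_of_bool (x.-1 == 0) * nat_of_bool (x != 0) * j.+2).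
Proof. by rewrite /stepP /= !(semC2, semC1, sem_add, sem_mul, sem_isz, sem_sg, sem_pred). Qed.

Lemma stepP_ok Z v F j st l : sem Z v [:: j, st & l] = ocode (F j) ->
  sem Z (stepP v) [:: j, st & l] = stepf F j st.
Proof.
rewrite sem_stepP /= /stepf => ->.
case: st => [|st] /=; last by rewrite mul0n addn0.
by case: (F j) => [[|w]|] //=; rewrite ?muln0 ?mul1n.
Qed.

Lemma args_s Z s xs : map (fun h => sem Z h (s.+1 :: xs)) (spred :: pps 1 (size xs)) = s :: xs.
Proof. by rewrite /= sem_pps1 /spred sem_pred. Qed.

Lemma semC Z f gs l : sem Z (PC f gs) l = sem Z f (map (fun g => sem Z g l) gs).
Proof. by []. Qed.

Lemma clk_ok Z Z' rm (Hrm : forall x, Z' (sem Z' rm [:: x]) = Z x) d :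
  forall e a s xs, e < d -> size xs = a -> sem Z' (clk rm d e a) (s :: xs) = ocode (eval s Z e xs).
Proof.
elim: d => // d IH e a s xs He Ha.
rewrite [clk _ _ _ _]/= semC2 sem_mul semC1 sem_sg /=.
case: s => [|s] /=; first by rewrite mul0n.
rewrite mul1n. have Hlt := @unpair_lt2 e.
have Hr : forall r, r <= (unpair e).2 -> 3 < (unpair e).1 -> r < d.
  move=> r Hr H4. have := Hlt (leq_trans _ H4). lia.
case: (unpair e).1 Hlt Hr => [|[|[|[|[|[|[|t]]]]]]] Hlt Hr.
- exact: sem_cst.
- by case: xs Ha.
- by [].
- by rewrite /= Hrm; case: xs Ha.
- (* composition *)
  rewrite /=.
  set r := (unpair e).2 in Hr *.
  set gs := decode_list (unpair r).2.
  have Hgs : forall g, g \in gs -> sem Z' (PC (clk rm d g a) (spred :: pps 1 a)) (s.+1 :: xs) = ocode (eval s Z g xs).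
    move=> g Hg. rewrite /= -Ha sem_pred sem_pps1 IH //. apply: Hr => //.
    have := allP (decode_le (unpair r).2.+1 (unpair r).2) g Hg. move=> H. apply: leq_trans H (unpair_le2 _).
  rewrite sem_mul sem_allpos all_map all_some_ocode.
  rewrite (eq_in_all (a2 := fun g => ocode (eval s Z g xs) != 0)); last by move=> g Hg; rewrite -(Hgs g Hg).
  case: ifP => Hall; last by rewrite mul0n.
  rewrite mul1n /= -!map_comp.
  rewrite (_ : map _ gs = map (fun g => (ocode (eval s Z g xs)).-1) gs); last first.
    apply/eq_in_map => g Hg; by rewrite -(Hgs g Hg) /= sem_pred.
  rewrite sem_pred IH ?size_map //. apply: Hr => //. exact: unpair_le1.
- (* primitive recursion *)
  set r := (unpair e).2 in Hr *.
  have Hf : (unpair r).1 < d by apply: Hr => //; exact: unpair_le1.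
  have Hg : (unpair r).2 < d by apply: Hr => //; exact: unpair_le2.
  have Hpr : forall n rest, size rest = a.-1 ->
     prf (sem Z' (PC (clk rm d (unpair r).1 a.-1) (spred :: pps 1 a.-1)) (s.+1 :: rest))
       (fun i acc => sem Z' (PC mulP [:: PC sgP [:: PP 1];
                     PC (clk rm d (unpair r).2 a.-1.+2) [:: PC predP [:: PP 2], PP 0, PC predP [:: PP 1] & pps 3 a.-1]])
                     [:: i, acc, s.+1 & rest]) n
     = ocode (prim_rec (fun i acc => eval s Z (unpair r).2 [:: i, acc & rest]) n (eval s Z (unpair r).1 rest)).
    move=> n rest Hrest. elim: n => [|n IHn] /=.
      by rewrite -Hrest /= sem_pred sem_pps1 IH.
    rewrite IHn sem_mul sem_sg /=.
    case: (prim_rec _ n _) => [v|] /=; last by rewrite mul0n.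
    rewrite mul1n -Hrest (sem_pps Z' [:: n; v.+1; s.+1] rest) !sem_pred /= IH //.
  rewrite semC.
  case: xs Ha => [|n rest] Ha; subst a.
    rewrite (_ : map _ _ = [:: 0; s.+1]) // semR. exact: (Hpr 0 [::] erefl).
  rewrite (_ : map _ _ = [:: n, s.+1 & rest]); last by rewrite /= (sem_pps Z' [:: s.+1; n] rest).
  rewrite semR. exact: (Hpr n rest erefl).
- (* minimisation *)
  set r := (unpair e).2 in Hr *.
  have Hr' : r < d by apply: Hr.
  subst a. rewrite semC1 sem_pred semC.
  rewrite (_ : map _ _ = [:: s, s.+1 & xs]); last by rewrite /= sem_pred (sem_pps Z' [:: s.+1] xs).
  rewrite semR mu_prf.
  congr predn. apply: prf_ext => j st. apply: stepP_ok.
  rewrite /= (sem_pps Z' [:: j; st; s.+1] xs) sem_pred /= IH //.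
- by [].
Qed.

Fixpoint num N (f : nat -> bool) : nat :=
  match N with 0 => 0 | N'.+1 => f 0 + 2 * num N' (fun i => f i.+1) end.

Lemma num_ext N f g : (forall i, i < N -> f i = g i) -> num N f = num N g.
Proof.
elim: N f g => //= N IH f g H. rewrite H // (IH (fun i => f i.+1) (fun i => g i.+1)) //.
by move=> i Hi; apply: H.
Qed.

Lemma num_mono N (f g : nat -> bool) : (forall i, f i -> g i) -> num N f <= num N g.
Proof.
elim: N f g => //= N IH f g H. have := IH (fun i => f i.+1) (fun i => g i.+1) (fun i => H i.+1).
case E: (f 0); first by rewrite (H _ E); lia.
case: (g 0); lia.
Qed.

Lemma iter_half0 i : iter i half 0 = 0.
Proof. by elim: i => //= i ->. Qed.

Lemma bitfS x i : bitf x i.+1 = bitf x./2 i.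
Proof. by rewrite /bitf iterSr. Qed.

Lemma bitf0 x : bitf x 0 = odd x.
Proof. by []. Qed.

Lemma bitf_num N f i : bitf (num N f) i = (i < N) && f i.
Proof.
elim: N f i => [|N IH] f i /=; first by rewrite /bitf iter_half0.
case: i => [|i].
  rewrite bitf0 oddD oddM /=. by case: (f 0).
rewrite bitfS (_ : (f 0 + 2 * num N (fun i => f i.+1))./2 = num N (fun i => f i.+1)).
  by rewrite IH.
by rewrite mul2n half_bit_double.
Qed.

Lemma num_bits K d : d < 2 ^ K -> num K (bitf d) = d.
Proof.
elim: K d => [|K IH] d /=; first by case: d.
move=> Hd. rewrite bitf0 (num_ext (g := bitf d./2)); last by move=> i _; rewrite bitfS.
rewrite IH; first by rewrite -{3}(odd_double_half d) -mul2n.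
have := odd_double_half d. move: Hd; rewrite expnS -!mul2n. lia.
Qed.

Lemma bitf_lt d i : bitf d i -> i < d.
Proof.
have H : d < 2 ^ d by apply: ltn_expl.
by rewrite -{1}(num_bits H) bitf_num => /andP[].
Qed.

Lemma bits_le d m : (forall i, bitf d i -> bitf m i) -> d <= m.
Proof.
move=> H. have Hd : d < 2 ^ (d + m) by apply: leq_trans (ltn_expl d (ltnSn 1)) (leq_pexp2l _ (leq_addr _ _)).
have Hm : m < 2 ^ (d + m) by apply: leq_trans (ltn_expl m (ltnSn 1)) (leq_pexp2l _ (leq_addl _ _)).
have := num_mono (d + m) H. by rewrite (num_bits Hd) (num_bits Hm).
Qed.

Lemma num_add1 N f x : x < N -> f x = false ->
  num N (fun i => (i == x) || f i) = 2 ^ x + num N f.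
Proof.
elim: N f x => // N IH f x Hx Hf /=.
case: x Hx Hf => [|x] Hx Hf /=.
  rewrite Hf expn0. lia.
rewrite (IH (fun i => f i.+1) x) //. rewrite expnS. lia.
Qed.

Lemma sum_num N (s : seq nat) : uniq s -> all (fun x => x < N) s ->
  \sum_(x <- s) 2 ^ x = num N (fun i => i \in s).
Proof.
elim: s => [|x s IH] /=.
  by rewrite big_nil; elim: N => //= N <-.
move=> /andP[Hx Hu] /andP[HxN Hall]. rewrite big_cons IH //.
rewrite -num_add1 //; last by apply/negbTE.
Qed.

Lemma canon_num N D : all (fun x => x < N) D -> canon_index D = num N (fun i => i \in D).
Proof.
move=> H. rewrite /canon_index (sum_num (N := N)) ?undup_uniq //.
  apply: num_ext => i _. by rewrite mem_undup.
apply/allP => x. rewrite mem_undup => Hx. exact: (allP H).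
Qed.

Lemma bitf_canon D i : bitf (canon_index D) i -> i \in D.
Proof.
set N := (\max_(x <- D) x).+1.
have H : all (fun x => x < N) D.
  apply/allP => x Hx. rewrite ltnS. exact: leq_bigmax_seq.
by rewrite (canon_num H) bitf_num => /andP[].
Qed.

Lemma canon_of_num d : canon_index [seq i <- iota 0 d | bitf d i] = d.
Proof.
rewrite (canon_num (N := d)).
  apply: etrans (num_bits (ltn_expl d (ltnSn 1))).
  apply: num_ext => i Hi. by rewrite mem_filter mem_iota /= Hi andbT.
apply/allP => x. by rewrite mem_filter mem_iota => /andP[_ /andP[_ ]].
Qed.

Lemma U_mask Z e Y : U Z e Y <-> exists d, (forall i, bitf d i -> Y i) /\ halts Z e d.
Proof.
split.
  move=> [D [HD Hh]]. exists (canon_index D); split => // i Hi. apply: HD. exact: bitf_canon.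
move=> [d [Hd Hh]]. exists [seq i <- iota 0 d | bitf d i]; split; last by rewrite canon_of_num.
move=> x. rewrite mem_filter => /andP[Hx _]. exact: Hd.
Qed.

Arguments pair : simpl never.
Arguments unpair : simpl never.
Opaque cst addP mulP iszP sgP predP oddP halfP iterH bitP impP orPr ballP bexP.

Definition submask d n := all (fun i => bitf d i ==> bitf n i) (iota 0 n.+1).
Definition disj d m n := all (fun i => ~~ (bitf d i && bitf m i)) (iota 0 n.+1).
Definition Qb (g0 g1 : nat -> bool) n :=
  all (fun m => submask m n ==> (has (fun d => submask d m && g0 d) (iota 0 m.+1) ||
                                 has (fun d => submask d n && disj d m n && g1 d) (iota 0 n.+1)))
      (iota 0 n.+1).

Lemma nbK b : (nat_of_bool b != 0) = b.
Proof. by case: b. Qed.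

Definition SUBM := PC (ballP (PC impP [:: PC bitP [:: PP 0; PP 1]; PC bitP [:: PP 0; PP 2]]) 2)
                      [:: PC PS [:: PP 1]; PP 0; PP 1].
Lemma sem_SUBM Z d n : sem Z SUBM [:: d; n] = nat_of_bool (submask d n).
Proof.
rewrite /SUBM semC /= (sem_ball Z _ [:: d; n]) /submask. congr nat_of_bool.
apply: eq_all => i. by rewrite semC2 /= !sem_bit sem_imp nbK.
Qed.
Opaque SUBM.

Definition DISJ := PC (ballP (PC iszP [:: PC mulP [:: PC bitP [:: PP 0; PP 1]; PC bitP [:: PP 0; PP 2]]]) 3)
                      [:: PC PS [:: PP 2]; PP 0; PP 1; PP 2].
Lemma sem_DISJ Z d m n : sem Z DISJ [:: d; m; n] = nat_of_bool (disj d m n).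
Proof.
rewrite /DISJ semC /= (sem_ball Z _ [:: d; m; n]) /disj. congr nat_of_bool.
apply: eq_all => i. rewrite semC1 semC2 /= !sem_bit sem_mul sem_isz.
by case: (bitf d i); case: (bitf m i).
Qed.
Opaque DISJ.

Definition GP c := PC sgP [:: c].
Lemma sem_GP Z c s d : sem Z (GP c) [:: s; d] = nat_of_bool (sem Z c [:: s; d] != 0).
Proof. by rewrite /GP semC1 sem_sg. Qed.
Opaque GP.

Definition EX0 c0 := PC (bexP (PC mulP [:: PC SUBM [:: PP 0; PP 2]; PC (GP c0) [:: PP 1; PP 0]]) 2)
                        [:: PC PS [:: PP 1]; PP 0; PP 1].
Lemma sem_EX0 Z c0 s m : sem Z (EX0 c0) [:: s; m] =
  nat_of_bool (has (fun d => submask d m && (sem Z c0 [:: s; d] != 0)) (iota 0 m.+1)).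
Proof.
rewrite /EX0 semC /= (sem_bex Z _ [:: s; m]). congr nat_of_bool.
apply: eq_has => d. rewrite semC2 /= sem_SUBM sem_GP sem_mul.
by case: (submask d m); case: (sem Z c0 [:: s; d] != 0).
Qed.
Opaque EX0.

Definition EX1 c1 := PC (bexP (PC mulP [:: PC SUBM [:: PP 0; PP 2];
                          PC mulP [:: PC DISJ [:: PP 0; PP 3; PP 2]; PC (GP c1) [:: PP 1; PP 0]]]) 3)
                        [:: PC PS [:: PP 1]; PP 0; PP 1; PP 2].
Lemma sem_EX1 Z c1 s n m : sem Z (EX1 c1) [:: s; n; m] =
  nat_of_bool (has (fun d => submask d n && disj d m n && (sem Z c1 [:: s; d] != 0)) (iota 0 n.+1)).
Proof.
rewrite /EX1 semC /= (sem_bex Z _ [:: s; n; m]). congr nat_of_bool.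
apply: eq_has => d. rewrite semC2 /= sem_SUBM sem_DISJ sem_GP !sem_mul.
by case: (submask d n); case: (disj d m n); case: (sem Z c1 [:: s; d] != 0).
Qed.
Opaque EX1.

Definition QP c0 c1 := PC (ballP (PC impP [:: PC SUBM [:: PP 0; PP 2];
                 PC orPr [:: PC (EX0 c0) [:: PP 1; PP 0]; PC (EX1 c1) [:: PP 1; PP 2; PP 0]]]) 2)
                        [:: PC PS [:: PP 1]; PP 0; PP 1].
Lemma sem_QP Z c0 c1 s n : sem Z (QP c0 c1) [:: s; n] =
  nat_of_bool (Qb (fun d => sem Z c0 [:: s; d] != 0) (fun d => sem Z c1 [:: s; d] != 0) n).
Proof.
rewrite /QP semC /= (sem_ball Z _ [:: s; n]) /Qb. congr nat_of_bool.
apply: eq_all => m. by rewrite [LHS]/= sem_SUBM sem_EX0 sem_EX1 sem_or sem_imp nbK.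
Qed.
Opaque QP.

Lemma mu_found F y0 b v : mu_search F y0 b = Some v -> F v = Some 0.
Proof.
elim: b y0 => //= b IH y0. case E: (F y0) => [[|w]|] //; last exact: IH.
by case=> <-.
Qed.

Lemma mu_exists F (w : nat -> nat) y y0 b : (forall y', y' <= y -> F y' = Some (w y')) -> w y = 0 ->
  y0 <= y -> y - y0 < b -> exists v, mu_search F y0 b = Some v.
Proof.
move=> HF Hw. elim: b y0 => // b IH y0 Hy0 Hb /=.
rewrite HF //. case E: (w y0) => [|u]; first by exists y0.
have Hne : y0 != y by apply/eqP => H; move: E; rewrite H Hw.
have Hlt : y0 < y by rewrite ltn_neqAle Hne.
apply: IH => //. lia.
Qed.

Lemma halts_mu Z q n : halts Z (pair 6 (cp q)) n <-> exists y, sem Z q [:: y; n] = 0.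
Proof.
split.
  move=> [[|k] [v]] //. rewrite eval_S unpair_pair /= => /mu_found H.
  exists v. have [k' H'] := cp_ok Z q [:: v; n]. by have := eval_det H H' => <-.
move=> [y Hy].
have [K HK] : exists K, forall y', y' <= y -> eval K Z (cp q) [:: y'; n] = Some (sem Z q [:: y'; n]).
  elim: y {Hy} => [|y [K HK]].
    have [k Hk] := cp_ok Z q [:: 0; n]. exists k => y'. rewrite leqn0 => /eqP ->. done.
  have [k Hk] := cp_ok Z q [:: y.+1; n]. exists (maxn K k) => y'.
  rewrite leq_eqVlt => /orP[/eqP -> | H]; first exact: eval_mono (leq_maxr _ _) Hk.
  apply: eval_mono (leq_maxl _ _) _. exact: HK.
have Hb : y - 0 < maxn K y.+1 by rewrite subn0 leq_max ltnSn orbT.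
have [v Hv] := mu_exists (F := fun y' => eval (maxn K y.+1) Z (cp q) [:: y'; n])
   (w := fun y' => sem Z q [:: y'; n]) (y := y) (y0 := 0) (b := maxn K y.+1)
   (fun y' Hy' => eval_mono (leq_maxl _ _) (HK y' Hy')) Hy (leq0n _) Hb.
exists (maxn K y.+1).+1, v. by rewrite eval_S unpair_pair.
Qed.

Arguments pair : simpl never.
Arguments unpair : simpl never.
Opaque cst addP mulP iszP sgP predP oddP halfP iterH bitP impP orPr ballP bexP SUBM DISJ GP EX0 EX1 QP.

Definition rm0 := PC addP [:: PP 0; PP 0].
Definition rm1 := PC PS [:: PC addP [:: PP 0; PP 0]].

Lemma rm0_ok X Y x : join X Y (sem (join X Y) rm0 [:: x]) = X x.
Proof. rewrite /rm0 /= sem_add /join addnn odd_double /=. by rewrite doubleK. Qed.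
Lemma rm1_ok X Y x : join X Y (sem (join X Y) rm1 [:: x]) = Y x.
Proof.
rewrite /rm1 /= sem_add /join addnn /= odd_double /=.
by rewrite uphalf_double. Qed.

Definition eP (e0 e1 : nat) :=
  pair 6 (cp (PC iszP [:: QP (clk rm0 e0.+1 e0 1) (clk rm1 e1.+1 e1 1)])).

Definition gS X e s d := ocode (eval s X e [:: d]) != 0.

Lemma eq_Qb g0 g1 g0' g1' n : g0 =1 g0' -> g1 =1 g1' -> Qb g0 g1 n = Qb g0' g1' n.
Proof.
move=> H0 H1. rewrite /Qb. apply: eq_all => m. congr (_ ==> _). congr orb.
  apply: eq_has => d. by rewrite H0.
apply: eq_has => d. by rewrite H1.
Qed.

Lemma halts_eP X0 X1 e0 e1 n :
  halts (join X0 X1) (eP e0 e1) n <-> exists s, Qb (gS X0 e0 s) (gS X1 e1 s) n.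
Proof.
rewrite halts_mu.
have E : forall s, sem (join X0 X1) (PC iszP [:: QP (clk rm0 e0.+1 e0 1) (clk rm1 e1.+1 e1 1)]) [:: s; n]
   = nat_of_bool (~~ Qb (gS X0 e0 s) (gS X1 e1 s) n).
  move=> s. rewrite semC1 sem_QP sem_isz.
  rewrite (eq_Qb (g0' := gS X0 e0 s) (g1' := gS X1 e1 s)) //.
  - by case: (Qb _ _ _).
  - move=> d. rewrite /gS (clk_ok (@rm0_ok X0 X1)) //.
  - move=> d. rewrite /gS (clk_ok (@rm1_ok X0 X1)) //.
split => [[s Hs] | [s Hs]]; exists s; move: (E s); rewrite ?Hs.
  by case: (Qb _ _ _).
by move=> ->.
Qed.

Lemma halts_gS X e d : halts X e d <-> exists s, gS X e s d.
Proof.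
split => [[k [v H]] | [s H]]; first by exists k; rewrite /gS H.
by move: H; rewrite /gS; case E: (eval s X e [:: d]) => [v|] // _; exists s, v.
Qed.

Lemma gS_mono X e s s' d : s <= s' -> gS X e s d -> gS X e s' d.
Proof.
rewrite /gS => Hs. case E: (eval s X e [:: d]) => [v|] // _.
by rewrite (eval_mono Hs E).
Qed.

Lemma collect N (R : nat -> nat -> bool) : (forall m s s', s <= s' -> R m s -> R m s') ->
  (forall m, m < N -> exists s, R m s) -> exists s, forall m, m < N -> R m s.
Proof.
move=> Hmono; elim: N => [|N IH] H; first by exists 0.
have [s1 H1] := IH (fun m Hm => H m (ltnW Hm)).
have [s2 H2] := H N (ltnSn N).
exists (maxn s1 s2) => m. rewrite ltnS leq_eqVlt => /orP[/eqP -> | Hm].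
  exact: Hmono (leq_maxr _ _) H2.
exact: Hmono (leq_maxl _ _) (H1 m Hm).
Qed.

Definition Pp (h0 h1 : nat -> Prop) n := forall chi : nat -> bool,
  (exists d, (forall i, bitf d i -> bitf n i && chi i) /\ h0 d) \/
  (exists d, (forall i, bitf d i -> bitf n i && ~~ chi i) /\ h1 d).

Lemma Qb_Pp X0 X1 e0 e1 n :
  (exists s, Qb (gS X0 e0 s) (gS X1 e1 s) n) <-> Pp (halts X0 e0) (halts X1 e1) n.
Proof.
have Hn : num n (bitf n) = n by apply: num_bits; exact: ltn_expl.
split.
  move=> [s Hs] chi.
  set m := num n (fun i => bitf n i && chi i).
  have Hbm : forall i, bitf m i = (i < n) && bitf n i && chi i by move=> i; rewrite bitf_num andbA.
  have Hmn : m < n.+1.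
    rewrite ltnS. have H := @num_mono n (fun i => bitf n i && chi i) (bitf n) (fun i H => proj1 (andP H)).
    by rewrite Hn in H.
  have Hsub : submask m n by apply/allP => i _; rewrite Hbm; apply/implyP => /andP[/andP[]].
  have := allP Hs m; rewrite mem_iota add0n Hmn => /(_ erefl). rewrite Hsub implyTb => /orP[] /hasP[d Hd /andP[H1 H2]].
  + left; exists d; split; last by apply/halts_gS; exists s.
    move=> i Hi. have Hid : i < d := bitf_lt Hi.
    move: Hd; rewrite mem_iota add0n ltnS => Hdm.
    have := allP H1 i; rewrite mem_iota add0n ltnS (leq_trans (ltnW Hid) Hdm) Hi => /(_ erefl) /=.
    by rewrite Hbm => /andP[/andP[_ ->] ->].
  + right; exists d; split; last by apply/halts_gS; exists s.
    move: H1 => /andP[H1 H3].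
    move=> i Hi. have Hid : i < d := bitf_lt Hi.
    move: Hd; rewrite mem_iota add0n ltnS => Hdn.
    have Hin : i \in iota 0 n.+1 by rewrite mem_iota add0n ltnS (leq_trans (ltnW Hid) Hdn).
    have := allP H1 i Hin; rewrite Hi /= => Hni.
    have := allP H3 i Hin; rewrite Hi /= Hbm Hni (bitf_lt Hni) /=. by move=> ->.
move=> HP.
have [s Hs] : exists s, forall m, m < n.+1 -> submask m n ==>
   (has (fun d => submask d m && gS X0 e0 s d) (iota 0 m.+1) ||
    has (fun d => submask d n && disj d m n && gS X1 e1 s d) (iota 0 n.+1)).
  apply: collect.
  - move=> m s s' Hss /implyP H; apply/implyP => /H /orP[] H'.
    + apply/orP; left. apply: sub_has H' => d /andP[-> ?]. exact: gS_mono Hss _.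
    + apply/orP; right. apply: sub_has H' => d /andP[-> ?]. exact: gS_mono Hss _.
  - move=> m Hm. case Hsub: (submask m n); last by exists 0.
    case: (HP (bitf m)) => [[d [Hd Hh]] | [d [Hd Hh]]]; move/halts_gS: Hh => [s Hs]; exists s; rewrite implyTb.
    + apply/orP; left; apply/hasP; exists d.
        rewrite mem_iota add0n ltnS. apply: bits_le => i /Hd /andP[]. done.
      rewrite Hs andbT. apply/allP => i _. apply/implyP => /Hd /andP[]. done.
    + apply/orP; right; apply/hasP; exists d.
        rewrite mem_iota add0n ltnS. apply: bits_le => i /Hd /andP[]. done.
      rewrite Hs andbT. apply/andP; split.
        apply/allP => i _. apply/implyP => /Hd /andP[]. done.
      apply/allP => i _. apply/negP => /andP[/Hd /andP[_ /negP]]. done.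
exists s. apply/allP => m. rewrite mem_iota add0n => Hm. exact: Hs.
Qed.

Lemma V_char X0 X1 e0 e1 Y :
  U (join X0 X1) (eP e0 e1) Y <-> exists n, (forall i, bitf n i -> Y i) /\ Pp (halts X0 e0) (halts X1 e1) n.
Proof.
rewrite U_mask. split => [[n [H1 H2]] | [n [H1 H2]]]; exists n; split => //.
  by apply/Qb_Pp/halts_eP.
by apply/halts_eP/Qb_Pp.
Qed.

Arguments pair : simpl never.
Arguments unpair : simpl never.
Opaque cst addP mulP iszP sgP predP oddP halfP iterH bitP impP orPr ballP bexP SUBM DISJ GP EX0 EX1 QP.

Definition e_ne := pair 6 (cp (PC iszP [:: PC sgP [:: PP 1]])).

Lemma num_false K : num K (fun _ => false) = 0.
Proof. by elim: K => //= K ->. Qed.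

Lemma U_ne Z Y : U Z e_ne Y <-> exists i, Y i.
Proof.
split.
  move/U_mask => [d [Hd /halts_mu [y]]]. rewrite semC1 /= sem_sg sem_isz.
  case: d Hd => [|d] Hd //= _.
  have H : d.+1 < 2 ^ d.+1 by apply: ltn_expl.
  case: (classic (exists i, bitf d.+1 i)) => [[i Hi]|Hn]; first by exists i; exact: Hd.
  have := num_bits H. rewrite (num_ext (g := fun _ => false)) ?num_false //.
  move=> i _. apply/negP => Hi. apply: Hn. by exists i.
move=> [i Hi]. exists [:: i]; split; first by move=> x; rewrite inE => /eqP ->.
apply/halts_mu. exists 0. rewrite semC1 /= sem_sg sem_isz /canon_index /= big_cons big_nil addn0.
by rewrite expn_eq0.
Qed.

Lemma U_up Z e X Y : U Z e X -> Defs.subset X Y -> U Z e Y.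
Proof. move=> [D [HD Hh]] HXY. exists D; split => // x Hx. apply: HXY. exact: HD. Qed.

Definition Bad (X : set) (h0 h1 : nat -> Prop) N (chi : nat -> bool) :=
  ~ (exists d, (forall i, bitf d i -> bitf (num N X) i && chi i) /\ h0 d) /\
  ~ (exists d, (forall i, bitf d i -> bitf (num N X) i && ~~ chi i) /\ h1 d).

Lemma Bad_mono X h0 h1 N N' chi chi' : N <= N' -> (forall i, i < N -> chi i = chi' i) ->
  Bad X h0 h1 N' chi' -> Bad X h0 h1 N chi.
Proof.
move=> HN Hc [B0 B1]; split.
  move=> [d [Hd Hh]]; apply: B0; exists d; split => // i /Hd.
  rewrite !bitf_num => /andP[/andP[Hi Hx] Hc']. by rewrite (leq_trans Hi HN) Hx -Hc.
move=> [d [Hd Hh]]; apply: B1; exists d; split => // i /Hd.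
rewrite !bitf_num => /andP[/andP[Hi Hx] Hc']. by rewrite (leq_trans Hi HN) Hx -Hc.
Qed.

Definition agree (chi : nat -> bool) (s : seq bool) := forall i, i < size s -> chi i = nth false s i.

Definition ext X h0 h1 (s : seq bool) := forall N, exists chi, agree chi s /\ Bad X h0 h1 N chi.

Lemma ext_step X h0 h1 s : ext X h0 h1 s -> ext X h0 h1 (rcons s true) \/ ext X h0 h1 (rcons s false).
Proof.
move=> H. apply: NNPP => Hn.
have [Nt Ht] : exists N, forall chi, agree chi (rcons s true) -> ~ Bad X h0 h1 N chi.
  apply: NNPP => Hc; apply: Hn; left => N. apply: NNPP => Hc2; apply: Hc; exists N => chi Ha Hb.
  by apply: Hc2; exists chi.
have [Nf Hf] : exists N, forall chi, agree chi (rcons s false) -> ~ Bad X h0 h1 N chi.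
  apply: NNPP => Hc; apply: Hn; right => N. apply: NNPP => Hc2; apply: Hc; exists N => chi Ha Hb.
  by apply: Hc2; exists chi.
have [chi [Ha Hb]] := H (maxn Nt Nf).
have Hag : agree chi (rcons s (chi (size s))).
  move=> i; rewrite size_rcons ltnS leq_eqVlt => /orP[/eqP -> | Hi].
    by rewrite nth_rcons ltnn eqxx.
  by rewrite nth_rcons Hi Ha.
case E: (chi (size s)); rewrite E in Hag.
  exfalso; apply: (Ht chi Hag). exact: Bad_mono (leq_maxl _ _) (fun _ _ => erefl) Hb.
exfalso; apply: (Hf chi Hag). exact: Bad_mono (leq_maxr _ _) (fun _ _ => erefl) Hb.
Qed.

Definition pickb (P : Prop) : bool := if excluded_middle_informative P then true else false.

Fixpoint sq X h0 h1 n : seq bool :=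
  match n with 0 => [::] | n'.+1 => let s := sq X h0 h1 n' in rcons s (pickb (ext X h0 h1 (rcons s true))) end.

Lemma koenig X h0 h1 : (forall N, exists chi, Bad X h0 h1 N chi) -> exists chi, forall N, Bad X h0 h1 N chi.
Proof.
move=> H.
have Hext : forall n, ext X h0 h1 (sq X h0 h1 n).
  elim => [|n IH] /=; first by move=> N; have [chi Hc] := H N; exists chi; split.
  rewrite /pickb; case: excluded_middle_informative => // Hn.
  by case: (ext_step IH).
have Hsz : forall n, size (sq X h0 h1 n) = n by elim => //= n IH; rewrite size_rcons IH.
have Hpre : forall n m i, n <= m -> i < n -> nth false (sq X h0 h1 m) i = nth false (sq X h0 h1 n) i.
  move=> n m i; elim: m => [|m IH]; first by rewrite leqn0 => /eqP ->.
  rewrite leq_eqVlt => /orP[/eqP -> //| Hnm] Hi /=.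
  rewrite nth_rcons Hsz (leq_trans Hi Hnm) IH //.
exists (fun i => nth false (sq X h0 h1 i.+1) i) => N.
have [chi [Ha Hb]] := Hext N N.
apply: Bad_mono (leqnn N) _ Hb => i Hi.
rewrite Ha ?Hsz // (Hpre i.+1 N i) //.
Qed.

Definition L2 (A : cls) (X : set) := forall P Q : set, (forall n, X n -> P n || Q n) -> A P \/ A Q.

Lemma L2_large (A : cls) : largeness A -> forall k (Y : nat -> set),
  (forall n, exists2 j, j < k & Y j n) -> exists2 j, j < k & L2 A (Y j).
Proof.
move=> [_ Hup Hcov] k Y HY. apply: NNPP => Hn.
have H : forall j, exists pq : set * set, j < k -> (forall n, Y j n -> pq.1 n || pq.2 n) /\ ~ A pq.1 /\ ~ A pq.2.
  move=> j. case: (ltnP j k) => Hj; last by exists (Y 0, Y 0).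
  have : ~ L2 A (Y j) by move=> HL; apply: Hn; exists j.
  move=> HL. apply: NNPP => Hc; apply: HL => P Q HPQ.
  apply: NNPP => HAB. apply: Hc; exists (P, Q) => _ /=; split => //.
  split; first by move=> HA; apply: HAB; left.
  by move=> HA; apply: HAB; right.
pose pq j := proj1_sig (constructive_indefinite_description _ (H j)).
have Hpq : forall j, j < k -> (forall n, Y j n -> (pq j).1 n || (pq j).2 n) /\ ~ A (pq j).1 /\ ~ A (pq j).2.
  move=> j; exact: (proj2_sig (constructive_indefinite_description _ (H j))).
have Hcover : forall n, exists2 i, i < k + k & (fun i => if odd i then (pq i./2).2 else (pq i./2).1) i n.
  move=> n. have [j Hj Hy] := HY n. have [Hc _] := Hpq j Hj.
  case/orP: (Hc n Hy) => Hn'.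
    exists j.*2; first by rewrite -addnn; lia.
    by rewrite /= odd_double doubleK.
  exists j.*2.+1; first by rewrite -addnn; lia.
  by rewrite /= odd_double /= uphalf_double.
have [i Hi HA] := Hcov (k + k) _ Hcover.
have Hik : i./2 < k.
  have := odd_double_half i. move: Hi; rewrite -addnn. lia.
have [_ [H1 H2]] := Hpq i./2 Hik.
by move: HA; case: (odd i).
Qed.


Lemma A_up (Xs : nat -> set) (C : nat -> nat -> Prop) (HL : largeness (U_C Xs C)) X Y : (U_C Xs C) X -> Defs.subset X Y -> (U_C Xs C) Y.
Proof. by case: HL => _ H _; apply: H. Qed.


Lemma L2_A (A : cls) X : L2 A X -> A X.
Proof. move=> H. by case: (H X X (fun n Hn => introT orP (or_introl Hn))). Qed.

Lemma large_AV (Xs : nat -> set) (C : nat -> nat -> Prop) (HL : largeness (U_C Xs C)) Z e : (forall X, L2 (U_C Xs C) X -> U Z e X) -> largeness (fun Y => (U_C Xs C) Y /\ U Z e Y).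
Proof.
move=> HLV.
have Hall : L2 (U_C Xs C) (fun _ => true).
  move=> P Q HPQ. case: HL => _ _ Hc.
  have Hcv : forall n, exists2 j, j < 2 & (fun j => if j == 0 then P else Q) j n.
    move=> n. case/orP: (HPQ n erefl) => H; [by exists 0 | by exists 1].
  have [j Hj HA] := Hc 2 _ Hcv.
  case: j Hj HA => [|[|j]] // _ H.
    by left.
  by right.
split.
- exists (fun _ => true). split; [exact: L2_A | exact: HLV].
- move=> X Y [H1 H2] H; split; [exact: (A_up HL H1 H) | exact: U_up H2 H].
- move=> k Y HY. have [j Hj HLj] := L2_large HL HY. exists j => //. split; [exact: L2_A | exact: HLV].
Qed.

Lemma empty_notA (Xs : nat -> set) (C : nat -> nat -> Prop) (HL : largeness (U_C Xs C)) (HM : minimal Xs (U_C Xs C)) : ~ (U_C Xs C) (fun _ => false).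
Proof.
move=> H0.
have Hc : coded_by Xs (Xs 0) by exists 0.
case: (HM _ Hc e_ne) => [Hsub | Hnl].
  by have /U_ne [i] := Hsub _ H0.
apply: Hnl. split.
- exists (fun _ => true). split; first by apply: (A_up HL H0) => n.
  by apply/U_ne; exists 0.
- move=> X Y [H1 H2] H; split; [exact: (A_up HL H1 H) | exact: U_up H2 H].
- move=> k Y HY. have [j Hj Hy] := HY 0. exists j => //. split; first by apply: (A_up HL H0) => n.
  by apply/U_ne; exists 0.
Qed.

Lemma pr2 (Xs : nat -> set) (C : nat -> nat -> Prop) (HS : scott_set (coded_by Xs)) (HL : largeness (U_C Xs C)) (HM : minimal Xs (U_C Xs C)) X Y0 Y1 : (U_C Xs C) X -> (forall n, X n -> Y0 n || Y1 n) -> (U_C Xs C) Y0 \/ (U_C Xs C) Y1.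
Proof.
move=> HX Hcov. apply: NNPP => Hn.
have [e0 [i0 [HC0 HU0]]] : exists e0 i0, C e0 i0 /\ ~ U (Xs i0) e0 Y0.
  apply: NNPP => Hc; apply: Hn; left => e i He. apply: NNPP => Hu; apply: Hc; by exists e, i.
have [e1 [i1 [HC1 HU1]]] : exists e1 i1, C e1 i1 /\ ~ U (Xs i1) e1 Y1.
  apply: NNPP => Hc; apply: Hn; right => e i He. apply: NNPP => Hu; apply: Hc; by exists e, i.
have Hcz : coded_by Xs (join (Xs i0) (Xs i1)).
  case: HS => _ Hj _. apply: Hj; [by exists i0 | by exists i1].
have HLV : forall X, L2 (U_C Xs C) X -> U (join (Xs i0) (Xs i1)) (eP e0 e1) X.
  move=> Z HZ. apply/V_char. apply: NNPP => Hno.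
  have HB : forall N, exists chi, Bad Z (halts (Xs i0) e0) (halts (Xs i1) e1) N chi.
    move=> N. apply: NNPP => Hb. apply: Hno. exists (num N Z). split.
      by move=> i; rewrite bitf_num => /andP[].
    move=> chi. apply: NNPP => Hor. apply: Hb. exists chi. split.
      by move=> Hl; apply: Hor; left.
    by move=> Hr; apply: Hor; right.
  have [chi Hchi] := koenig HB.
  case: (HZ (fun n => Z n && chi n) (fun n => Z n && ~~ chi n)).
  - by move=> n ->; case: (chi n).
  - move=> /(_ e0 i0 HC0) /U_mask [d [Hd Hh]].
    have [B0 _] := Hchi d. apply: B0. exists d; split => // i Hi.
    by rewrite bitf_num (bitf_lt Hi); case/andP: (Hd i Hi) => -> ->.
  - move=> /(_ e1 i1 HC1) /U_mask [d [Hd Hh]].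
    have [_ B1] := Hchi d. apply: B1. exists d; split => // i Hi.
    by rewrite bitf_num (bitf_lt Hi); case/andP: (Hd i Hi) => -> ->.
case: (HM _ Hcz (eP e0 e1)) => [Hsub | Hnl]; last by apply: Hnl; exact: large_AV HL _ _ HLV.
have /V_char [n [Hn1 Hn2]] := Hsub X HX.
case: (Hn2 Y0) => [[d [Hd Hh]] | [d [Hd Hh]]].
  apply: HU0. apply/U_mask. exists d; split => // i /Hd /andP[]. done.
apply: HU1. apply/U_mask. exists d; split => // i /Hd /andP[Hni Hc].
have := Hcov i (Hn1 i Hni). by rewrite (negbTE Hc).
Qed.

Lemma prk (Xs : nat -> set) (C : nat -> nat -> Prop) (HS : scott_set (coded_by Xs)) (HL : largeness (U_C Xs C)) (HM : minimal Xs (U_C Xs C)) k : forall X (Y : nat -> set), (U_C Xs C) X -> (forall n, X n -> exists2 j, j < k & Y j n) ->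
  exists2 j, j < k & (U_C Xs C) (Y j).
Proof.
elim: k => [|k IH] X Y HX HY.
  exfalso; apply: (empty_notA HL HM). apply: (A_up HL HX) => n /HY [j]. done.
have Hcv : forall n, X n -> Y k n || has (fun j => Y j n) (iota 0 k).
  move=> n /HY [j Hj Hy]. case: (ltngtP j k) => Hjk.
  + apply/orP; right; apply/hasP; exists j => //. by rewrite mem_iota.
  + lia.
  + by subst j; rewrite Hy.
case: (pr2 HS HL HM (Y0 := Y k) (Y1 := fun n => has (fun j => Y j n) (iota 0 k)) HX Hcv) => H.
  by exists k.
have Hcv2 : forall n, has (fun j => Y j n) (iota 0 k) -> exists2 j, j < k & Y j n.
  move=> n /hasP [j]. rewrite mem_iota add0n => Hj Hy. by exists j.
have [j Hj HA] := IH (fun n => has (fun j => Y j n) (iota 0 k)) Y H Hcv2.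
by exists j => //; apply: ltnW.
Qed.



Unset Implicit Arguments.
Theorem corollary2p13 (Xs : nat -> set) (C : nat -> nat -> Prop) :
  scott_set (coded_by Xs) ->
  largeness (U_C Xs C) ->
  minimal Xs (U_C Xs C) ->
  partition_regular (U_C Xs C).
Proof.
move=> HS HL HM. split => // X HX k Y HY. exact: (prk HS HL HM HX HY).
Qed.
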